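(* (i) For integers $p\geq 0$, $k\geq p+1$ and $n\geq 2k-p+2$, $\rho(M_{n,n-1}^{k-p,n-k-1})>\rho(M_{n,n-1}^{n-k-1,k-p})$. (ii) For integers $p\geq 0$, $k\geq p+2$ and $n\geq 2k-p+2$, $\rho(M_{n,n-1}^{n-k,k-p-1})>\rho(M_{n,n-1}^{k-p,n-k-1})$.
   Context: $\rho$ denotes the largest eigenvalue of the adjacency matrix. $M_{n,m}^{s,t}$: bipartite graph with parts $X=X_1\cup X_2$, $Y=Y_1\cup Y_2$, $|X_1|=s$, $|X_2|=n-s$, $|Y_1|=m-t$, $|Y_2|=t$; edges are all pairs between $X_1$ and $Y_1$, between $X_2$ and $Y_1$, and between $X_2$ and $Y_2$. *)

(* Defs.v *)
From HB Require Import structures.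
From mathcomp Require Import all_boot all_order all_algebra.
From mathcomp Require Import reals.
From mathcomp.real_closed Require Import polyrcf.
Set Implicit Arguments. Unset Strict Implicit. Unset Printing Implicit Defensive.
Import Order.TTheory GRing.Theory Num.Theory.
Local Open Scope ring_scope.

(* Vertices of M_{n,m}^{s,t} are 'I_(n+m): indices u < n form X
   (X1 = {u < s}, X2 = {s <= u < n}); indices n + y with y < m form Y
   (Y1 = {y < m - t}, Y2 = {m - t <= y < m}).
   Edges: X1-Y1, X2-Y1, X2-Y2, i.e. x ~ y iff y in Y1 or x in X2. *)
Definition Mst_edgeXY (n m s t u v : nat) : bool :=
  [&& u < n, n <= v & (v - n < m - t) || (s <= u)]%N.

Definition Mst_adj (R : nzRingType) (n m s t : nat) : 'M[R]_(n + m) :=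
  \matrix_(i, j) (if Mst_edgeXY n m s t i j || Mst_edgeXY n m s t j i
                  then 1 else 0).

Definition rho (R : rcfType) (N : nat) (A : 'M[R]_N) : R :=
  let s := rootsR (char_poly A) in \big[Num.max/head 0 s]_(x <- s) x.

(* Main.v *)
Require Import Defs.
From HB Require Import structures.
From mathcomp Require Import all_boot all_order all_algebra.
From mathcomp Require Import reals.
From mathcomp.real_closed Require Import polyrcf.
From mathcomp Require Import zify ring lra.
Import Order.TTheory GRing.Theory Num.Theory.
Local Open Scope ring_scope.

Lemma bigmax_eq (R : realDomainType) (l : seq R) (idx y : R) :
  idx <= y -> y \in l -> (forall x, x \in l -> x <= y) ->
  \big[Num.max/idx]_(x <- l) x = y.
Proof.
move=> hi; elim: l => [//|z l IH] hy hall.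
have hb : \big[Num.max/idx]_(x <- l) x <= y.
  rewrite big_seq; apply: (big_ind (fun w => w <= y)) => //.
    by move=> u w hu hw; rewrite ge_max hu hw.
  by move=> i hil; apply: hall; rewrite in_cons hil orbT.
rewrite big_cons.
have [ezy|nzy] := eqVneq z y; first by rewrite ezy max_l.
have hyl : y \in l by move: hy; rewrite in_cons eq_sym (negbTE nzy).
rewrite IH // ?max_r //; first by apply: hall; rewrite mem_head.
by move=> x hx; apply: hall; rewrite in_cons hx orbT.
Qed.

Section Graph.
Variables (R : rcfType) (n m s t : nat).
Hypotheses (hs : (s <= n)%N) (ht : (t <= m)%N).
Local Notation N := (n + m)%N.
Local Notation A := (Mst_adj R n m s t).

Definition c1 (i : nat) := (i < s)%N.
Definition c2 (i : nat) := (s <= i < n)%N.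
Definition c3 (i : nat) := (n <= i < n + (m - t))%N.
Definition c4 (i : nat) := (n + (m - t) <= i)%N.

Lemma adj1 (i j : 'I_N) : c1 j -> A i j = (c3 i)%:R.
Proof.
move=> hj; rewrite mxE.
have -> : (Mst_edgeXY n m s t i j || Mst_edgeXY n m s t j i) = c3 i.
  by move: (ltn_ord i) (ltn_ord j) hj; rewrite /c1 /c3 /Mst_edgeXY; lia.
by case: (c3 i).
Qed.

Lemma adj2 (i j : 'I_N) : c2 j -> A i j = (c3 i)%:R + (c4 i)%:R.
Proof.
move=> hj; rewrite mxE.
have -> : (Mst_edgeXY n m s t i j || Mst_edgeXY n m s t j i) = c3 i || c4 i.
  by move: (ltn_ord i) (ltn_ord j) hj; rewrite /c2 /c3 /c4 /Mst_edgeXY; lia.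
have : ~~ (c3 i && c4 i) by rewrite /c3 /c4; lia.
by case: (c3 i); case: (c4 i); rewrite /= ?addr0 ?add0r.
Qed.

Lemma adj3 (i j : 'I_N) : c3 j -> A i j = (c1 i)%:R + (c2 i)%:R.
Proof.
move=> hj; rewrite mxE.
have -> : (Mst_edgeXY n m s t i j || Mst_edgeXY n m s t j i) = c1 i || c2 i.
  by move: (ltn_ord i) (ltn_ord j) hj; rewrite /c1 /c2 /c3 /Mst_edgeXY; lia.
have : ~~ (c1 i && c2 i) by rewrite /c1 /c2; lia.
by case: (c1 i); case: (c2 i); rewrite /= ?addr0 ?add0r.
Qed.

Lemma adj4 (i j : 'I_N) : c4 j -> A i j = (c2 i)%:R.
Proof.
move=> hj; rewrite mxE.
have -> : (Mst_edgeXY n m s t i j || Mst_edgeXY n m s t j i) = c2 i.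
  by move: (ltn_ord i) (ltn_ord j) hj; rewrite /c2 /c4 /Mst_edgeXY; lia.
by case: (c2 i).
Qed.

Definition S (w : 'rV[R]_N) (c : nat -> bool) := \sum_(i < N) w 0 i * (c i)%:R.
Lemma S_eig (w w' : 'rV[R]_N) (c : nat -> bool) x :
  (forall j, w' 0 j = x * w 0 j) -> S w' c = x * S w c.
Proof. by move=> h; rewrite /S mulr_sumr; apply: eq_bigr => i _; rewrite h mulrA. Qed.

Definition cnt (c : nat -> bool) : R := \sum_(i < N) (c i)%:R.

Lemma col1 (v : 'rV[R]_N) (j : 'I_N) : c1 j -> (v *m A) 0 j = S v c3.
Proof. by move=> hj; rewrite mxE; apply: eq_bigr => i _; rewrite adj1. Qed.
Lemma col2 (v : 'rV[R]_N) (j : 'I_N) : c2 j -> (v *m A) 0 j = S v c3 + S v c4.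
Proof. by move=> hj; rewrite mxE -big_split; apply: eq_bigr => i _; rewrite adj2 // mulrDr. Qed.
Lemma col3 (v : 'rV[R]_N) (j : 'I_N) : c3 j -> (v *m A) 0 j = S v c1 + S v c2.
Proof. by move=> hj; rewrite mxE -big_split; apply: eq_bigr => i _; rewrite adj3 // mulrDr. Qed.
Lemma col4 (v : 'rV[R]_N) (j : 'I_N) : c4 j -> (v *m A) 0 j = S v c2.
Proof. by move=> hj; rewrite mxE; apply: eq_bigr => i _; rewrite adj4. Qed.

Lemma S_const (w : 'rV[R]_N) (c : nat -> bool) C : (forall i : 'I_N, c i -> w 0 i = C) -> S w c = C * cnt c.
Proof.
move=> h; rewrite /S /cnt mulr_sumr; apply: eq_bigr => i _.
case: (boolP (c i)) => [ci|ci]; [by rewrite h | by rewrite (_ : (false%:R : R) = 0) // !mulr0].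
Qed.

Lemma S_scale (w : 'rV[R]_N) (c : nat -> bool) x : S (x *: w) c = x * S w c.
Proof. by rewrite /S mulr_sumr; apply: eq_bigr => i _; rewrite mxE mulrA. Qed.

Lemma cnt_itv (c : nat -> bool) lo hi : (lo <= hi)%N -> (hi <= N)%N ->
  (forall i, (i < N)%N -> c i = (lo <= i < hi)%N) -> cnt c = (hi - lo)%:R.
Proof.
move=> h1 h2 hc; rewrite /cnt.
rewrite (eq_bigr (fun i : 'I_N => ((lo <= i < hi)%N)%:R)); last by move=> i _; rewrite hc.
rewrite -(big_mkord xpredT (fun i => ((lo <= i < hi)%N)%:R)).
rewrite (big_cat_nat (n:=lo)) //=; last by lia.
rewrite (big_cat_nat (n:=hi) (m := lo)) //=.
rewrite (eq_big_nat _ _ (F2 := fun _ => 0)); last by move=> i hi'; have -> : (lo <= i < hi)%N = false by lia.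
rewrite [X in _ + (X + _)](eq_big_nat _ _ (F2 := fun _ => 1)); last by move=> i hi'; have -> : (lo <= i < hi)%N = true by lia.
rewrite [X in _ + (_ + X)](eq_big_nat _ _ (F2 := fun _ => 0)); last by move=> i hi'; have -> : (lo <= i < hi)%N = false by lia.
by rewrite !sumr_const_nat !mul0rn add0r addr0.
Qed.

Lemma cnt1 : cnt c1 = s%:R.
Proof. have := @cnt_itv c1 0 s; rewrite subn0; apply; [lia|lia|by move=> i _; rewrite /c1]. Qed.
Lemma cnt2 : cnt c2 = (n - s)%:R.
Proof. have := @cnt_itv c2 s n; apply; [lia|lia|by []]. Qed.
Lemma cnt3 : cnt c3 = (m - t)%:R.
Proof. have := @cnt_itv c3 n (n + (m - t)); rewrite (_ : (n + (m - t) - n = m - t)%N); last lia. apply; [lia|lia|by []]. Qed.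
Lemma cnt4 : cnt c4 = t%:R.
Proof. have := @cnt_itv c4 (n + (m - t)) N; rewrite (_ : (N - (n + (m - t)) = t)%N); last lia. apply; [lia|lia|rewrite /c4; lia]. Qed.

Lemma cls (i : 'I_N) : [|| c1 i, c2 i, c3 i | c4 i].
Proof. move: (ltn_ord i); rewrite /c1 /c2 /c3 /c4; lia. Qed.


Local Notation a := (s%:R : R).
Local Notation b := ((n - s)%:R : R).
Local Notation c := ((m - t)%:R : R).
Local Notation d := (t%:R : R).
Definition Tt : R := a * c + b * c + b * d.
Definition Dd : R := a * b * c * d.
Definition Pz (z : R) := z ^+ 4 - Tt * z ^+ 2 + Dd.

Lemma eig_root x : 0 < b -> 0 < c -> 0 < x -> eigenvalue A x -> Pz x = 0.
Proof.
move=> hb hc hx /eigenvalueP [v hv vn0].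
have hv2 : forall j, (v *m A) 0 j = x * v 0 j by move=> j; rewrite hv mxE.
have e1 : x * S v c1 = a * S v c3.
  by rewrite -(S_eig _ _ _ _ hv2) (S_const _ _ (S v c3)) ?cnt1; [exact: mulrC | by move=> i; exact: col1].
have e2 : x * S v c2 = b * (S v c3 + S v c4).
  by rewrite -(S_eig _ _ _ _ hv2) (S_const _ _ (S v c3 + S v c4)) ?cnt2; [exact: mulrC | by move=> i; exact: col2].
have e3 : x * S v c3 = c * (S v c1 + S v c2).
  by rewrite -(S_eig _ _ _ _ hv2) (S_const _ _ (S v c1 + S v c2)) ?cnt3; [exact: mulrC | by move=> i; exact: col3].
have e4 : x * S v c4 = d * S v c2.
  by rewrite -(S_eig _ _ _ _ hv2) (S_const _ _ (S v c2)) ?cnt4; [exact: mulrC | by move=> i; exact: col4].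
set S1 := S v c1 in e1 e2 e3 e4; set S2 := S v c2 in e1 e2 e3 e4.
set S3 := S v c3 in e1 e2 e3 e4; set S4 := S v c4 in e1 e2 e3 e4.
have E5 : (x ^+ 2 - a * c) * S3 = c * x * S2.
  have h : x * (x * S3) = x * (c * (S1 + S2)) by rewrite e3.
  have h' : c * (x * S1) = c * (a * S3) by rewrite e1.
  lra.
have E6 : (x ^+ 2 - b * d) * S2 = b * x * S3.
  have h : x * (x * S2) = x * (b * (S3 + S4)) by rewrite e2.
  have h' : b * (x * S4) = b * (d * S2) by rewrite e4.
  lra.
have P3 : Pz x * S3 = 0.
  have h5 : (x ^+ 2 - b * d) * ((x ^+ 2 - a * c) * S3) = (x ^+ 2 - b * d) * (c * x * S2) by rewrite E5.
  have h6 : c * x * ((x ^+ 2 - b * d) * S2) = c * x * (b * x * S3) by rewrite E6.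
  rewrite /Pz /Tt /Dd; lra.
have P2 : Pz x * S2 = 0.
  have h5 : (x ^+ 2 - a * c) * ((x ^+ 2 - b * d) * S2) = (x ^+ 2 - a * c) * (b * x * S3) by rewrite E6.
  have h6 : b * x * ((x ^+ 2 - a * c) * S3) = b * x * (c * x * S2) by rewrite E5.
  rewrite /Pz /Tt /Dd; lra.
have [//|Pn0] := eqVneq (Pz x) 0.
exfalso; move/eqP: P3; rewrite mulf_eq0 (negbTE Pn0) /= => /eqP S30.
move/eqP: P2; rewrite mulf_eq0 (negbTE Pn0) /= => /eqP S20.
have xn0 : x != 0 by rewrite gt_eqF.
have S10 : S1 = 0.
  by apply/eqP; move: e1; rewrite S30 mulr0 => /eqP; rewrite mulf_eq0 (negbTE xn0).
have S40 : S4 = 0.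
  by apply/eqP; move: e4; rewrite S20 mulr0 => /eqP; rewrite mulf_eq0 (negbTE xn0).
move/eqP: vn0; apply; apply/rowP => j; rewrite [RHS]mxE.
have hj : x * v 0 j = (v *m A) 0 j by rewrite hv mxE.
have : (v *m A) 0 j = 0.
  by case/or4P: (cls j) => cj; [rewrite col1 | rewrite col2 | rewrite col3 | rewrite col4];
     rewrite // -/S1 -/S2 -/S3 -/S4 ?S10 ?S20 ?S30 ?S40 ?addr0.
rewrite -hj => /eqP; rewrite mulf_eq0 (negbTE xn0) /= => /eqP //.
Qed.

Definition gv (al be ga de : R) (i : nat) :=
  if c1 i then al else if c2 i then be else if c3 i then ga else de.
Lemma gv1 al be ga de i : c1 i -> gv al be ga de i = al.
Proof. by rewrite /gv => ->. Qed.
Lemma gv2 al be ga de i : c2 i -> gv al be ga de i = be.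
Proof.
move=> h; have h1 : c1 i = false by move: h; rewrite /c1 /c2; lia.
by rewrite /gv h1 h.
Qed.
Lemma gv3 al be ga de i : c3 i -> gv al be ga de i = ga.
Proof.
move=> h; have h1 : c1 i = false by move: h; rewrite /c1 /c3; lia.
have h2 : c2 i = false by move: h; rewrite /c2 /c3; lia.
by rewrite /gv h1 h2 h.
Qed.
Lemma gv4 al be ga de i : c4 i -> gv al be ga de i = de.
Proof.
move=> h; have h1 : c1 i = false by move: h; rewrite /c1 /c4; lia.
have h2 : c2 i = false by move: h; rewrite /c2 /c4; lia.
have h3 : c3 i = false by move: h; rewrite /c3 /c4; lia.
by rewrite /gv h1 h2 h3.
Qed.

Lemma eig_exists lam : 0 < b -> 0 < c -> 0 < lam -> Pz lam = 0 -> eigenvalue A lam.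
Proof.
move=> hb hc hl hP; apply/eigenvalueP.
pose al := c * b * lam; pose be := lam * (lam ^+ 2 - a * c).
pose ga := b * lam ^+ 2; pose de := b * (lam ^+ 2 - a * c).
pose v := \row_(j < N) gv al be ga de j.
have Sv1 : S v c1 = al * a by rewrite (S_const _ _ al) ?cnt1 // => i hi; rewrite mxE gv1.
have Sv2 : S v c2 = be * b by rewrite (S_const _ _ be) ?cnt2 // => i hi; rewrite mxE gv2.
have Sv3 : S v c3 = ga * c by rewrite (S_const _ _ ga) ?cnt3 // => i hi; rewrite mxE gv3.
have Sv4 : S v c4 = de * d by rewrite (S_const _ _ de) ?cnt4 // => i hi; rewrite mxE gv4.
exists v.
- apply/rowP => j; rewrite [RHS]mxE [X in _ = _ * X]mxE.
  case/or4P: (cls j) => cj.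
  + rewrite (col1 v j cj) Sv3 (gv1 _ _ _ _ _ cj) /ga /al; lra.
  + rewrite (col2 v j cj) Sv3 Sv4 (gv2 _ _ _ _ _ cj).
    move: hP; rewrite /Pz /Tt /Dd /ga /de /be => hP; lra.
  + rewrite (col3 v j cj) Sv1 Sv2 (gv3 _ _ _ _ _ cj) /ga /al /be; lra.
  + rewrite (col4 v j cj) Sv2 (gv4 _ _ _ _ _ cj) /be /de; lra.
- have hmt : (0 < m - t)%N by move: hc; rewrite ltr0n.
  have hn : (n < N)%N by lia.
  have h3 : c3 (Ordinal hn) by rewrite /c3 /=; lia.
  have gn0 : ga != 0 by rewrite /ga mulf_neq0 ?expf_neq0 // gt_eqF.
  apply/negP => /eqP /rowP /(_ (Ordinal hn)); rewrite !mxE (gv3 _ _ _ _ _ h3) => /eqP.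
  by rewrite (negbTE gn0).
Qed.

Definition lamv := Num.sqrt ((Tt + Num.sqrt (Tt ^+ 2 - 4 * Dd)) / 2).

Lemma rhoE : 0 < b -> 0 < c -> rho A = lamv.
Proof.
move=> hb hc.
have ha : 0 <= a := ler0n _ _.
have hd : 0 <= d := ler0n _ _.
have hdisc : 0 <= Tt ^+ 2 - 4 * Dd.
  have h1 : 0 <= (a * c - b * d) ^+ 2 := sqr_ge0 _.
  have h2 : 0 <= b * c * (a * c + b * d).
    apply: mulr_ge0; first by apply: mulr_ge0; apply: ltW.
    by apply: addr_ge0; apply: mulr_ge0 => //; apply: ltW.
  have h3 : 0 <= (b * c) ^+ 2 := sqr_ge0 _.
  rewrite /Tt /Dd; lra.
rewrite /lamv; set q := Num.sqrt (Tt ^+ 2 - 4 * Dd).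
have hq : q ^+ 2 = Tt ^+ 2 - 4 * Dd by rewrite sqr_sqrtr.
have hq0 : 0 <= q := sqrtr_ge0 _.
have hT : 0 < Tt.
  rewrite /Tt; have := mulr_gt0 hb hc; have := mulr_ge0 ha (ltW hc);
  have := mulr_ge0 (ltW hb) hd; lra.
set r := (Tt + q) / 2.
have hr0 : 0 < r by rewrite /r; lra.
have hr : r ^+ 2 - Tt * r + Dd = 0 by rewrite /r; lra.
set lam := Num.sqrt r.
have hl2 : lam ^+ 2 = r by rewrite sqr_sqrtr // ltW.
have hl0 : 0 < lam by rewrite sqrtr_gt0.
have hPl : Pz lam = 0.
  have e4 : lam ^+ 4 = (lam ^+ 2) ^+ 2 by rewrite -exprM.
  by rewrite /Pz e4 hl2.
have rootsE : forall x, (x \in rootsR (char_poly A)) = eigenvalue A x.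
  move=> x; rewrite -(roots_on_rootsR (monic_neq0 (char_poly_monic A))).
  by rewrite -eigenvalue_root_char in_itv.
have hmem : lam \in rootsR (char_poly A) by rewrite rootsE (eig_exists lam hb hc hl0 hPl).
have hup : forall x, x \in rootsR (char_poly A) -> x <= lam.
  move=> x; rewrite rootsE => hx.
  have [hx0|hxp] := lerP x 0; first exact: le_trans hx0 (ltW hl0).
  have hPx := eig_root x hb hc hxp hx.
  rewrite leNgt; apply/negP => hlt.
  have hy : r < x ^+ 2 by rewrite -hl2; nra.
  have : 0 < (x ^+ 2 - r) * (x ^+ 2 - (Tt - r)) by apply: mulr_gt0; rewrite /r in hy *; lra.
  move: hPx; rewrite /Pz => hPx; lra.
rewrite /rho /=; move: hmem hup; case: (rootsR (char_poly A)) => [//|z l] hmem hup /=.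
by apply: bigmax_eq => //; apply: hup; rewrite mem_head.
Qed.

End Graph.

Definition Tf {R : rcfType} (a b c d : R) := a * c + b * c + b * d.
Definition Df {R : rcfType} (a b c d : R) := a * b * c * d.
Definition Lf {R : rcfType} (a b c d : R) :=
  Num.sqrt ((Tf a b c d + Num.sqrt (Tf a b c d ^+ 2 - 4 * Df a b c d)) / 2).

Lemma rho_val (R : rcfType) n m s t a0 bb cc d0 : s = a0 -> t = d0 ->
  n = (s + bb)%N -> m = (cc + t)%N -> (0 < bb)%N -> (0 < cc)%N ->
  rho (Mst_adj R n m s t) = Lf (a0%:R) (bb%:R) (cc%:R) (d0%:R).
Proof.
move=> -> -> en em hb hc.
rewrite rhoE; [|lia|lia|rewrite ltr0n; lia|rewrite ltr0n; lia].
rewrite /lamv /Lf /Tf /Df /Tt /Dd.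
have -> : (n - a0 = bb)%N by lia.
by have -> : (m - d0 = cc)%N by lia.
Qed.

Lemma Lf_lt (R : rcfType) (a b c d a' b' c' d' : R) :
  0 <= Tf a b c d -> Tf a b c d <= Tf a' b' c' d' ->
  0 <= Tf a b c d ^+ 2 - 4 * Df a b c d ->
  Tf a b c d ^+ 2 - 4 * Df a b c d < Tf a' b' c' d' ^+ 2 - 4 * Df a' b' c' d' ->
  Lf a b c d < Lf a' b' c' d'.
Proof.
move=> h0 h1 h2 h3; rewrite /Lf.
move: h2 h3; set E := Tf a b c d ^+ 2 - _; set E' := Tf a' b' c' d' ^+ 2 - _ => h2 h3.
have hE' : 0 < E' by apply: le_lt_trans h3.
have hq : Num.sqrt E < Num.sqrt E' by rewrite ltr_sqrt.
have hq0 : 0 <= Num.sqrt E := sqrtr_ge0 _.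
rewrite ltr_sqrt; lra.
Qed.

Lemma disc_ge0 (R : rcfType) (a b c d : R) : 0 <= a -> 0 <= b -> 0 <= c -> 0 <= d ->
  0 <= Tf a b c d ^+ 2 - 4 * Df a b c d.
Proof.
move=> ha hb hc hd.
have h1 : 0 <= (a * c - b * d) ^+ 2 := sqr_ge0 _.
have h2 : 0 <= b * c * (a * c + b * d).
  by apply: mulr_ge0; [apply: mulr_ge0 | apply: addr_ge0; apply: mulr_ge0].
have h3 : 0 <= (b * c) ^+ 2 := sqr_ge0 _.
rewrite /Tf /Df; lra.
Qed.

Lemma Lf_lt2 (R : rcfType) (a b c d a' b' c' d' : R) :
  0 <= a -> 0 <= b -> 0 <= c -> 0 <= d ->
  0 <= Tf a b c d -> Tf a b c d <= Tf a' b' c' d' ->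
  Df a' b' c' d' < Df a b c d -> Lf a b c d < Lf a' b' c' d'.
Proof.
move=> ha hb hc hd h0 h1 h2; apply: Lf_lt => //; first exact: disc_ge0.
have : Tf a b c d ^+ 2 <= Tf a' b' c' d' ^+ 2 by nra.
lra.
Qed.

Theorem lemma5p1 (R : realType) :
  (forall p k n : nat, (p + 1 <= k)%N -> (2 * k - p + 2 <= n)%N ->
     rho (Mst_adj R n (n - 1) (k - p) (n - k - 1))
       > rho (Mst_adj R n (n - 1) (n - k - 1) (k - p)))
  /\
  (forall p k n : nat, (p + 2 <= k)%N -> (2 * k - p + 2 <= n)%N ->
     rho (Mst_adj R n (n - 1) (n - k) (k - p - 1))
       > rho (Mst_adj R n (n - 1) (k - p) (n - k - 1))).
Proof.
split=> p k n hk hn.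
- have [q ek] : exists q, k = (p + 1 + q)%N by exists (k - p - 1)%N; lia.
  have [u en] : exists u, n = (u + p + q + 2)%N by exists (n - p - q - 2)%N; lia.
  have hu : (q + 2 <= u)%N by lia.
  rewrite (@rho_val R _ _ _ _ u (p + q + 2)%N (u + p)%N (q + 1)%N); try lia.
  rewrite (@rho_val R _ _ _ _ (q + 1)%N (u + p + 1)%N (p + q + 1)%N u); try lia.
  have hU : ((q + 2)%:R <= u%:R :> R) by rewrite ler_nat.
  rewrite natrD in hU.
  have hP : (0 <= p%:R :> R) := ler0n _ _.
  have hQ : (0 <= q%:R :> R) := ler0n _ _.
  apply: Lf_lt2; try exact: ler0n.
  + rewrite /Tf ?natrD; nra.
  + rewrite /Tf ?natrD; lra.
  + have hD : 0 < u%:R * (q%:R + 1) * (u%:R - q%:R - 1) :> R.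
      by apply: mulr_gt0; [apply: mulr_gt0|]; lra.
    rewrite /Df ?natrD; lra.
- have [q ek] : exists q, k = (p + 1 + q)%N by exists (k - p - 1)%N; lia.
  have [u en] : exists u, n = (u + p + q + 2)%N by exists (n - p - q - 2)%N; lia.
  have hu : (q + 2 <= u)%N by lia.
  have hq1 : (1 <= q)%N by lia.
  rewrite (@rho_val R _ _ _ _ (q + 1)%N (u + p + 1)%N (p + q + 1)%N u); try lia.
  rewrite (@rho_val R _ _ _ _ (u + 1)%N (p + q + 1)%N (u + p + 1)%N q); try lia.
  have hU : ((q + 2)%:R <= u%:R :> R) by rewrite ler_nat.
  rewrite natrD in hU.
  have hP : (0 <= p%:R :> R) := ler0n _ _.
  have hQ : (0 <= q%:R :> R) := ler0n _ _.
  apply: Lf_lt2; try exact: ler0n.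
  + rewrite /Tf ?natrD; nra.
  + rewrite /Tf ?natrD; lra.
  + have hD : 0 < (u%:R + p%:R + 1) * (p%:R + q%:R + 1) * (u%:R - q%:R) :> R.
      by apply: mulr_gt0; [apply: mulr_gt0|]; lra.
    rewrite /Df ?natrD; lra.
Qed.
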